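(* Let $n\ge 1$, let $\gamma_1,\dots,\gamma_{n+1}\in\mathbb{C}$, and let $s_1,\dots,s_{n+1}$ be sufficiently differentiable functions of $z$. Then $$W^{\gamma_n,\gamma_{n+1}}_2\Big(W^{\gamma_1,\dots,\gamma_n}_n(s_1,\dots,s_n),\ W^{\gamma_1,\dots,\gamma_{n-1},\gamma_{n+1}}_n(s_1,\dots,s_{n-1},s_{n+1})\Big)=W^{\gamma_1,\dots,\gamma_{n-1}}_{n-1}(s_1,\dots,s_{n-1})\;W^{\gamma_1,\dots,\gamma_{n+1}}_{n+1}(s_1,\dots,s_{n+1}).$$
   Context: For constants $\gamma_i$ put $\nabla_i=\partial_z+\gamma_i$. For $k\ge1$ the twisted Wronskian of functions $f_1,\dots,f_k$ with twists $\gamma_{i_1},\dots,\gamma_{i_k}$ is the determinant $$W^{\gamma_{i_1},\dots,\gamma_{i_k}}_k(f_1,\dots,f_k)=\det_{1\le a,b\le k}\big[(\partial_z+\gamma_{i_a})^{b-1}f_a\big];$$ in particular $W^{\alpha,\beta}_2(f,g)=f\,(g'+\beta g)-g\,(f'+\alpha f)$. By convention the Wronskian of the empty family ($k=0$) equals $1$. *)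

(* Defs.v *)
From HB Require Import structures.
From mathcomp Require Import all_boot all_order all_algebra.
From mathcomp Require Import complex.
From mathcomp Require Import all_classical all_reals all_analysis.
Set Implicit Arguments. Unset Strict Implicit. Unset Printing Implicit Defensive.
Import Order.TTheory GRing.Theory Num.Theory numFieldNormedType.Exports.
Local Open Scope ring_scope.

(* The complex numbers R[i] (R a real number field) viewed as a normed
   vector space over themselves, with the modulus as norm; this gives the
   usual topology, so that [derive1] is the complex derivative d/dz. *)
Section complex_normed.
Variable R : rcfType.
HB.instance Definition _ := GRing.ComAlgebra.copy R[i] R[i]^o.
HB.instance Definition _ := Vector.copy R[i] R[i]^o.
HB.instance Definition _ := NormedModule.copy R[i] R[i]^o.
End complex_normed.

Definition nabla (R : realType) (g : R[i]) (f : R[i] -> R[i]) : R[i] -> R[i] :=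
  fun z => derive1 f z + g * f z.

(* Twisted Wronskian with families indexed 1..k:
   twW k g f z = det_{1<=a,b<=k} [ (d/dz + g a)^(b-1) (f a) ] (z).
   For k = 0 the determinant of the empty matrix is 1. *)
Definition twW (R : realType) (k : nat) (g : nat -> R[i])
  (f : nat -> R[i] -> R[i]) : R[i] -> R[i] :=
  fun z => \det (\matrix_(a < k, b < k) iter b (nabla (g a.+1)) (f a.+1) z).

(* Main.v *)
Require Import Defs.
From HB Require Import structures.
From mathcomp Require Import all_boot all_order all_algebra.
From mathcomp Require Import complex.
From mathcomp Require Import perm.
From mathcomp Require Import ring.
From mathcomp Require Import all_classical all_reals all_analysis.
Import Order.TTheory GRing.Theory Num.Theory numFieldNormedType.Exports.
Local Open Scope ring_scope.

Section An.
Variable R : realType.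
Local Notation C := (R[i]).

Lemma is_derive_sumF (I : finType) (h : I -> C -> C) (dh : I -> C) (z : C) :
  (forall i, is_derive z (1:C) (h i) (dh i)) ->
  is_derive z (1:C) (fun w => \sum_i h i w) (\sum_i dh i).
Proof.
move=> H; rewrite -fct_sumE; elim/big_ind2: _ => //.
- exact: is_derive_cst.
- by move=> f df g dg Hf Hg; apply: is_deriveD.
Qed.

Lemma is_derive_prodI m (h : 'I_m -> C -> C) (dh : 'I_m -> C) (z : C) :
  (forall i, is_derive z (1:C) (h i) (dh i)) ->
  is_derive z (1:C) (fun w => \prod_i h i w)
    (\sum_(j < m) \prod_(i < m) (if i == j then dh i else h i z)).
Proof.
elim: m h dh => [|m IH] h dh H.
  have -> : (fun w => \prod_(i < 0) h i w) = cst 1 by apply/funext=> w; rewrite big_ord0.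
  rewrite big_ord0; exact: is_derive_cst.
have -> : (fun w => \prod_(i < m.+1) h i w) =
   (fun w => (\prod_(i < m) h (widen_ord (leqnSn m) i) w) * h ord_max w).
  by apply/funext=> w; rewrite big_ord_recr.
have := is_deriveM (IH _ _ (fun i => H (widen_ord (leqnSn m) i))) (H ord_max).
move/is_derive_eq; apply.
rewrite big_ord_recr /= big_ord_recr /= addrC.
rewrite eqxx; congr (_ + _).
  rewrite [X in X = _]/GRing.scale /=; congr (_ * _); apply: eq_bigr => i _.
  have -> : (widen_ord (leqnSn m) i == ord_max) = false.
    by apply/negbTE; rewrite neq_ltn /= ltn_ord.
  by [].
rewrite [X in X = _]/GRing.scale /= mulr_sumr; apply: eq_bigr => j _.
rewrite big_ord_recr /=.
have -> : (ord_max == widen_ord (leqnSn m) j) = false.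
  by apply/negbTE; rewrite neq_ltn /= ltn_ord orbT.
rewrite mulrC; congr (_ * _); apply: eq_bigr => i _.
all: by rewrite ?(inj_eq (@widen_ord_inj _ _ _)).
Qed.

Lemma is_derive_det m (F : 'I_m -> 'I_m -> C -> C) (z : C) :
  (forall i j, derivable (F i j) z (1:C)) ->
  is_derive z (1:C) (fun w => \det (\matrix_(i, j) F i j w))
    (\sum_(a < m) \det (\matrix_(i, j) if i == a then 'D_(1:C) (F i j) z else F i j z)).
Proof.
move=> H.
have -> : (fun w => \det (\matrix_(i, j) F i j w)) =
  (fun w => \sum_(s : perm_of (ordinal m)) ((-1) ^+ s * \prod_i F i (s i) w)).
  apply/funext => w; rewrite /determinant; apply: eq_bigr => s _.
  by congr (_ * _); apply: eq_bigr => i _; rewrite mxE.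
have D := (@is_derive_sumF (perm_of (ordinal m)) (fun s w => (-1) ^+ s * \prod_i F i (s i) w) (fun s => cst ((-1) ^+ s : C) z *: (\sum_(j < m) \prod_(i < m) (if i == j then 'D_(1:C) (F i (s i)) z else F i (s i) z)) + (\prod_i F i (s i) z) *: 0) z
   (fun s => is_deriveM (is_derive_cst ((-1) ^+ s : C) z (1:C))
     (@is_derive_prodI m (fun i => F i (s i)) _ z (fun i => derivableP (H i (s i)))))).
eapply is_derive_eq; first exact D.
rewrite /determinant exchange_big /=; apply: eq_bigr => s _.
rewrite /cst scaler0 addr0 scaler_sumr; apply: eq_bigr => a _.
rewrite [LHS]/GRing.scale /=; congr (_ * _); apply: eq_bigr => i _; rewrite mxE.
by case: (i == a).
Qed.
End An.
Section An2.
Variable R : realType.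
Local Notation C := (R[i]).

Definition smooth (f : C -> C) := forall k (z : C), derivable (derive1n k f) z (1:C).

Lemma derive1nD k (f h : C -> C) : smooth f -> smooth h ->
  derive1n k (fun z => f z + h z) = (fun z => derive1n k f z + derive1n k h z).
Proof.
move=> sf sh; elim: k => [//|k IH].
rewrite !derive1nS IH; apply/funext => z.
rewrite !derive1E; exact: deriveD.
Qed.

Lemma derive1nZ k (g : C) (f : C -> C) : smooth f ->
  derive1n k (fun z => g * f z) = (fun z => g * derive1n k f z).
Proof.
move=> sf; elim: k => [//|k IH].
rewrite !derive1nS IH; apply/funext => z.
rewrite !derive1E; exact: deriveMl.
Qed.

Lemma smooth_nabla g f : smooth f -> smooth (nabla g f).
Proof.
move=> sf k z.
have -> : nabla g f = (fun z => derive1 f z + (fun w => g * f w) z) by [].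
have sd : smooth (derive1 f) by move=> j w; rewrite -derive1Sn; apply: sf.
have sg : smooth (fun w => g * f w) by move=> j w; rewrite derive1nZ //; apply: derivableM => //; apply: derivable_cst.
rewrite derive1nD //; apply: derivableD; [exact: sd | exact: sg].
Qed.

Lemma smooth_iter b g f : smooth f -> smooth (iter b (nabla g) f).
Proof. by move=> sf; elim: b => [//|b IH] /=; apply: smooth_nabla. Qed.
End An2.
Section Alg.
Variable F : comRingType.

Lemma det22 (A : 'M[F]_2) : \det A = A 0 0 * A 1 1 - A 0 1 * A 1 0.
Proof.
rewrite (expand_det_row _ 0) big_ord_recl big_ord1 /cofactor !det_mx11 !mxE /=.
rewrite !expr0 !mul1r expr1 mulN1r mulrN.
have l00 : lift (0:'I_2) (0:'I_1) = 1 by apply: val_inj.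
have l10 : lift (1:'I_2) (0:'I_1) = 0 by apply: val_inj.
have l01 : lift (0:'I_2) (0:'I_1) = 1 by apply: val_inj.
rewrite ?l00 ?l10 ?l01.
by [].
Qed.

Lemma det_row_repl m (A : 'M[F]_m) a (w : 'I_m -> F) :
  \det (\matrix_(i, j) if i == a then w j else A i j) = \sum_j w j * cofactor A a j.
Proof.
rewrite (expand_det_row _ a); apply: eq_bigr => j _; rewrite mxE eqxx.
congr (_ * _); rewrite /cofactor; congr (_ * \det _).
apply/matrixP => i k; rewrite !mxE.
by have /negbTE -> : lift a i != a by rewrite eq_sym neq_lift.
Qed.

Lemma det_col_repl m (A : 'M[F]_m) b (w : 'I_m -> F) :
  \det (\matrix_(i, j) if j == b then w i else A i j) = \sum_i w i * cofactor A i b.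
Proof.
rewrite (expand_det_col _ b); apply: eq_bigr => i _; rewrite mxE eqxx.
congr (_ * _); rewrite /cofactor; congr (_ * \det _).
apply/matrixP => i' k; rewrite !mxE.
by have /negbTE -> : lift b k != b by rewrite eq_sym neq_lift.
Qed.

Lemma shift_sum m (x : nat -> nat -> F) : (0 < m)%N ->
  \sum_(a < m) \sum_(b < m) x a b.+1 * cofactor (\matrix_(i < m, j < m) x i j) a b =
  \det (\matrix_(i < m, j < m) x i (if (j == m.-1 :> nat) then m else j)).
Proof.
case: m x => [//|m] x _ /=.
set A := \matrix_(i, j) x i j.
rewrite exchange_big big_ord_recr /= big1 ?add0r => [|j _].
  rewrite -det_col_repl; congr (\det _); apply/matrixP => i j; rewrite !mxE.
  have -> : (j == ord_max) = (val j == m) by [].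
  by case: eqP.
have jm : (j.+1 < m.+1)%N by rewrite ltnS ltn_ord.
rewrite -(@det_col_repl _ A (widen_ord (leqnSn m) j) (fun i => x i j.+1)).
rewrite -det_tr; apply: (@determinant_alternate _ _ _ (widen_ord (leqnSn m) j) (Ordinal jm)).
  by rewrite neq_ltn /= ltnSn.
move=> i; rewrite !mxE /= eqxx.
have -> : (Ordinal jm == widen_ord (leqnSn m) j) = false.
  by apply/negbTE; rewrite neq_ltn /= ltnSn orbT.
by [].
Qed.

Lemma deriv_sum_form m (x : nat -> nat -> F) (c : nat -> F) : (0 < m)%N ->
  \sum_(a < m) \det (\matrix_(i < m, j < m) if i == a then x i j.+1 - c i * x i j else x i j)
  = \det (\matrix_(i < m, j < m) x i (if (j == m.-1 :> nat) then m else j))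
    - (\sum_(a < m) c a) * \det (\matrix_(i < m, j < m) x i j).
Proof.
move=> m0; rewrite -shift_sum // mulr_suml -sumrB; apply: eq_bigr => a _.
set A := \matrix_(i < m, j < m) x i j.
have -> : (\matrix_(i < m, j < m) if i == a then x i j.+1 - c i * x i j else x i j)
   = \matrix_(i, j) if i == a then x a j.+1 - c a * x a j else A i j.
  by apply/matrixP => i j; rewrite !mxE; case: eqP => // ->.
rewrite det_row_repl (expand_det_row A a) mulr_sumr -sumrB; apply: eq_bigr => j _.
by rewrite mxE mulrBl -mulrA.
Qed.
End Alg.
Set Implicit Arguments. Unset Strict Implicit.
Section Sylv.
Variable F : comRingType.

Lemma schur_adj k q (A : 'M[F]_k) (B : 'M[F]_(k, q)) (Cc : 'M[F]_(q, k)) (D : 'M[F]_(q)) :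
  \det (block_mx A B Cc D) * \det A ^+ q
  = \det A * \det (\det A *: D - Cc *m \adj A *m B).
Proof.
set d := \det A.
have E : block_mx A B Cc D *m block_mx 1%:M (- (\adj A *m B)) 0 d%:M
   = block_mx A 0 Cc (d *: D - Cc *m \adj A *m B).
  rewrite mulmx_block !mulmx1 !mulmx0 !addr0 !mulmxN mulmxA mul_mx_adj.
  rewrite mul_scalar_mx mul_mx_scalar addNr addrC mulmxA.
  by rewrite mul_mx_scalar.
have := congr1 determinant E.
rewrite det_mulmx det_lblock det_ublock det1 mul1r det_scalar.
by [].
Qed.
End Sylv.

Section SylvD.
Variable F : idomainType.

Lemma mx_row_col_mul k (Cc : 'M[F]_(2, k)) (P : 'M[F]_k) (B : 'M[F]_(k, 2)) i j :
  (row i Cc *m P *m col j B) 0 0 = (Cc *m P *m B) i j.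
Proof.
rewrite !mxE; apply: eq_bigr => t _; rewrite !mxE; congr (_ * _).
by apply: eq_bigr => u _; rewrite !mxE.
Qed.

Lemma det22' (A : 'M[F]_2) : \det A = A 0 0 * A 1 1 - A 0 1 * A 1 0.
Proof.
rewrite (expand_det_row _ 0) big_ord_recl big_ord1 /cofactor !det_mx11 !mxE /=.
rewrite !expr0 !mul1r expr1 mulN1r mulrN.
have l00 : lift (0:'I_2) (0:'I_1) = 1 by apply: val_inj.
have l10 : lift (1:'I_2) (0:'I_1) = 0 by apply: val_inj.
by rewrite ?l00 ?l10.
Qed.

Definition minor2 k (A : 'M[F]_k) (B : 'M[F]_(k, 2)) (Cc : 'M[F]_(2, k)) (D : 'M[F]_2) (i j : 'I_2) :=
  \det (block_mx A (col j B) (row i Cc) (D i j)%:M).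

Lemma sylv_dom k (A : 'M[F]_k) B Cc D : \det A != 0 ->
  \det A * \det (block_mx A B Cc D)
  = minor2 A B Cc D 0 0 * minor2 A B Cc D 1 1 - minor2 A B Cc D 0 1 * minor2 A B Cc D 1 0.
Proof.
move=> dA.
set d := \det A.
set Z := d *: D - Cc *m \adj A *m B.
have hM : d * \det (block_mx A B Cc D) = \det Z.
  apply: (mulfI dA); rewrite -schur_adj -/d.
  by rewrite expr2; ring.
have hm : forall i j, minor2 A B Cc D i j = Z i j.
  move=> i j; apply: (mulfI dA).
  rewrite /minor2 -[X in X * _ = _](expr1 d) mulrC schur_adj -/d det_mx11.
  congr (_ * _); rewrite !mxE eqxx mulr1n; congr (_ - _).
  by apply: eq_bigr => t _; rewrite -row_mul !mxE.
by rewrite hM det22' !hm.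
Qed.
End SylvD.

Section SylvF.
Variable F : idomainType.

Lemma map_horner0C m n (B : 'M[F]_(m, n)) : map_mx (horner_eval 0) (map_mx polyC B) = B.
Proof. by apply/matrixP => i j; rewrite !mxE horner_evalE hornerC. Qed.

Lemma sylv k (A : 'M[F]_k) B Cc D :
  \det A * \det (block_mx A B Cc D)
  = minor2 A B Cc D 0 0 * minor2 A B Cc D 1 1 - minor2 A B Cc D 0 1 * minor2 A B Cc D 1 0.
Proof.
pose A' := char_poly_mx (- A).
have nz : \det A' != 0 by apply: monic_neq0; apply: char_poly_monic.
have hA : map_mx (horner_eval 0) A' = A.
  apply/matrixP => i j; rewrite !mxE horner_evalE.
  by rewrite hornerD hornerN hornerMn hornerX mul0rn hornerC sub0r opprK.
have := sylv_dom (map_mx polyC B) (map_mx polyC Cc) (map_mx polyC D) nz.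
move/(congr1 (horner_eval 0)).
rewrite /minor2 !rmorphB !rmorphM -!det_map_mx !map_block_mx !map_scalar_mx.
rewrite -!map_col -!map_row !map_horner0C hA.
have hD : forall x : F, (horner_eval (0:F) : {rmorphism {poly F} -> F}) x%:P = x by move=> x; exact: hornerC.
by move=> ->; rewrite !mxE !hD.
Qed.
End SylvF.

Section DJ.
Variable F : idomainType.

Lemma det_eq m m' (Y : nat -> nat -> F) : m = m' ->
  \det (\matrix_(i < m, j < m) Y i j) = \det (\matrix_(i < m', j < m') Y i j).
Proof. by move=> ->. Qed.

Lemma blk p q (Y : nat -> nat -> F) :
  \matrix_(i < p + q, j < p + q) Y i j =
  block_mx (\matrix_(i < p, j < p) Y i j) (\matrix_(i < p, j < q) Y i (p + j)%N)
           (\matrix_(i < q, j < p) Y (p + i)%N j) (\matrix_(i < q, j < q) Y (p + i)%N (p + j)%N).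
Proof.
apply/matrixP => i j; rewrite mxE -(fintype.splitK i) -(fintype.splitK j).
case: (fintype.split i) => i'; case: (fintype.split j) => j'.
- by rewrite block_mxEul mxE.
- by rewrite block_mxEur mxE.
- by rewrite block_mxEdl mxE.
- by rewrite block_mxEdr mxE.
Qed.

Lemma DJ k (X : nat -> nat -> F) :
  let rr := fun i => if i == k then k.+1 else i in
  \det (\matrix_(i < k.+1, j < k.+1) X i j) * \det (\matrix_(i < k.+1, j < k.+1) X (rr i) (rr j))
  - \det (\matrix_(i < k.+1, j < k.+1) X (rr i) j) * \det (\matrix_(i < k.+1, j < k.+1) X i (rr j))
  = \det (\matrix_(i < k, j < k) X i j) * \det (\matrix_(i < k.+2, j < k.+2) X i j).
Proof.
move=> rr.
pose A := \matrix_(i < k, j < k) X i j.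
pose B := \matrix_(i < k, j < 2) X i (k + j)%N.
pose Cc := \matrix_(i < 2, j < k) X (k + i)%N j.
pose D := \matrix_(i < 2, j < 2) X (k + i)%N (k + j)%N.
have hM : \det (\matrix_(i < k.+2, j < k.+2) X i j) = \det (block_mx A B Cc D).
  by rewrite (det_eq X (esym (addn2 k))) (blk k 2 X).
have hm : forall (i j : 'I_2), minor2 A B Cc D i j =
   \det (\matrix_(a < k.+1, b < k.+1) X (if (a == k :> nat) then (k + i)%N else a) (if (b == k :> nat) then (k + j)%N else b)).
  move=> i j; pose Yf := (fun a b => X (if a == k then (k + i)%N else a) (if b == k then (k + j)%N else b)).
  rewrite /minor2 -(det_eq Yf (addn1 k)) (blk k 1 Yf); congr (\det _).
  have ord10 : forall b : 'I_1, ((k + b)%N == k) = true.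
    by case=> [[|//] ?] /=; rewrite addn0 eqxx.
  have ltk : forall a : 'I_k, (a == k :> nat) = false by move=> a; rewrite ltn_eqF.
  congr (block_mx _ _ _ _); apply/matrixP => a b; rewrite /Yf !mxE ?ord10 ?ltk //.
  by rewrite (ord1 a) (ord1 b) eqxx mulr1n.
have e0 : forall a, (if a == k then (k + nat_of_ord (0%R : 'I_2))%N else a) = a.
  by move=> a; case: eqP => [->|] //=; rewrite addn0.
have e1 : forall a, (if a == k then (k + nat_of_ord (1%R : 'I_2))%N else a) = rr a.
  by move=> a; rewrite /rr addn1.
have m00 : minor2 A B Cc D 0 0 = \det (\matrix_(a < k.+1, b < k.+1) X a b).
  by rewrite hm; congr (\det _); apply/matrixP => a b; rewrite !mxE !e0.
have m11 : minor2 A B Cc D 1 1 = \det (\matrix_(a < k.+1, b < k.+1) X (rr a) (rr b)).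
  by rewrite hm; congr (\det _); apply/matrixP => a b; rewrite !mxE !e1.
have m01 : minor2 A B Cc D 0 1 = \det (\matrix_(a < k.+1, b < k.+1) X a (rr b)).
  by rewrite hm; congr (\det _); apply/matrixP => a b; rewrite !mxE e0 e1.
have m10 : minor2 A B Cc D 1 0 = \det (\matrix_(a < k.+1, b < k.+1) X (rr a) b).
  by rewrite hm; congr (\det _); apply/matrixP => a b; rewrite !mxE e0 e1.
have := sylv A B Cc D; rewrite -hM m00 m11 m01 m10 => E.
by rewrite [X in _ - X]mulrC -E.

Qed.
End DJ.

Section Main.
Variable R : realType.
Local Notation C := (R[i]).

Lemma deriv_twW (m : nat) (gg : nat -> C) (ss : nat -> C -> C) (z : C) : (0 < m)%N ->
  (forall a, (a < m)%N -> smooth R (ss a.+1)) ->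
  derive1 (twW m gg ss) z =
   \det (\matrix_(i < m, j < m) iter (if (j == m.-1 :> nat) then m else j) (nabla (gg i.+1)) (ss i.+1) z)
   - (\sum_(a < m) gg a.+1) * twW m gg ss z.
Proof.
move=> m0 hs.
have D := @is_derive_det R m (fun (i j : 'I_m) => iter j (nabla (gg i.+1)) (ss i.+1)) z
  (fun i j => @smooth_iter R j (gg i.+1) _ (hs i (ltn_ord i)) 0%N z).
rewrite derive1E /twW derive_val.
rewrite -(@deriv_sum_form _ m (fun i j => iter j (nabla (gg i.+1)) (ss i.+1) z) (fun i => gg i.+1) m0).
apply: eq_bigr => a _; congr (\det _); apply/matrixP => i j; rewrite !mxE.
case: eqP => // _.
by rewrite -derive1E /= /nabla addrK.
Qed.

End Main.

Unset Implicit Arguments.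

Lemma final_alg (F : comRingType) (a b c d g1 g2 S P : F) :
  a * d - c * b = P ->
  a * ((d - (S - g1 + g2) * c) + g2 * c) - ((b - S * a) + g1 * a) * c = P.
Proof. by move=> <-; ring. Qed.

Theorem mainTheorem4 (R : realType) (n : nat) (gamma : nat -> R[i])
  (s : nat -> R[i] -> R[i]) :
  (0 < n)%N ->
  (forall i k (z : R[i]), (1 <= i <= n.+1)%N ->
     derivable (derive1n k (s i)) z 1) ->
  forall z : R[i],
    twW 2 (fun j => if j == 1%N then gamma n else gamma n.+1)
          (fun j => if j == 1%N then twW n gamma s
                    else twW n (fun i => if i == n then gamma n.+1 else gamma i)
                               (fun i => if i == n then s n.+1 else s i)) z
    = twW n.-1 gamma s z * twW n.+1 gamma s z.
Proof.
case: n => [//|k] _ hs z /=.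
have sm : forall i, (1 <= i <= k.+2)%N -> smooth R (s i).
  by move=> i hi j w; apply: hs.
set g2 := (fun i => if i == k.+1 then gamma k.+2 else gamma i).
set s2 := (fun i => if i == k.+1 then s k.+2 else s i).
have d1 := @deriv_twW R k.+1 gamma s z (ltn0Sn k) (fun a ha => sm a.+1 (ltnW ha)).
have hs2 : forall a, (a < k.+1)%N -> smooth R (s2 a.+1).
  move=> a ha; rewrite /s2; case: eqP => _; apply: sm.
    by rewrite leqnn.
  by rewrite /= ltnW.
have d2 := @deriv_twW R k.+1 g2 s2 z (ltn0Sn k) hs2.
have sum2 : \sum_(a < k.+1) g2 a.+1 = \sum_(a < k.+1) gamma a.+1 - gamma k.+1 + gamma k.+2.
  rewrite !big_ord_recr /= /g2 eqxx addrK.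
  by rewrite (eq_bigr (fun i : 'I_k => gamma i.+1)) // => a _; rewrite eqSS ltn_eqF.
set f1 := twW k.+1 gamma s.
set f2 := twW k.+1 g2 s2.
have L : twW 2 (fun j => if j == 1%N then gamma k.+1 else gamma k.+2)
          (fun j => if j == 1%N then f1 else f2) z
         = f1 z * nabla (gamma k.+2) f2 z - nabla (gamma k.+1) f1 z * f2 z.
  by rewrite /twW det22 !mxE /=.
rewrite L /nabla d1 d2 sum2.

apply: final_alg.
pose X := fun a b => iter b (nabla (gamma a.+1)) (s a.+1) z.
have E := @DJ _ k X.
rewrite -E; congr (_ * _ - _ * _). all: try by [].
- f_equal; apply/matrixP => i j; rewrite !mxE /X /g2 /s2.
  have -> : (i.+1 == k.+1) = (i == k :> nat) by [].
  by case: (nat_of_ord i == k).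
- rewrite /f2 /twW; f_equal; apply/matrixP => i j; rewrite !mxE /X /g2 /s2.
  have -> : (i.+1 == k.+1) = (i == k :> nat) by [].
  by case: (nat_of_ord i == k).
Qed.
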